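(* For $n\ge 1$, the number of shallow $123$-avoiding involutions in $S_n$ equals $\lfloor n^2/4\rfloor+1$.
   Context: For $\pi\in S_n$: $D(\pi)=\sum_{i}|\pi_i-i|$, $I(\pi)$ is the number of inversions, $T(\pi)=n-\mathrm{cyc}(\pi)$ with $\mathrm{cyc}$ the number of cycles in the disjoint cycle decomposition; $\pi$ is shallow if $I(\pi)+T(\pi)=D(\pi)$. A permutation avoids a pattern $\sigma$ if it has no subsequence order-isomorphic to $\sigma$. An involution is a permutation with $\pi=\pi^{-1}$. *)

(* Defs.v *)
From mathcomp Require Import all_boot all_order all_fingroup.
From mathcomp Require Import ssrint.
Set Implicit Arguments. Unset Strict Implicit. Unset Printing Implicit Defensive.

(* Permutations of {1..n} are modelled as 'S_n, permutations of 'I_n = {0..n-1};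
   the shift by one changes none of the statistics below. *)

Definition total_disp n (s : 'S_n) : nat := \sum_(i : 'I_n) `|(s i : nat) - (i : nat)|%N.

Definition inv_count n (s : 'S_n) : nat :=
  #|[set p : 'I_n * 'I_n | (p.1 < p.2) && (s p.2 < s p.1)]|.

Definition cyc n (s : 'S_n) : nat := #|porbits s|.
Definition transp_dist n (s : 'S_n) : nat := n - cyc s.

Definition shallow n (s : 'S_n) : bool :=
  inv_count s + transp_dist s == total_disp s.

Definition avoids123 n (s : 'S_n) : bool :=
  [forall i : 'I_n, forall j : 'I_n, forall k : 'I_n,
     ~~ [&& i < j, j < k, s i < s j & s j < s k]].

Definition involution n (s : 'S_n) : bool := (s^-1)%g == s.

(* Main.v *)
Require Import Defs.
From mathcomp Require Import all_boot all_order all_fingroup.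
From mathcomp Require Import ssrint.
From mathcomp Require Import zify.
Set Implicit Arguments. Unset Strict Implicit. Unset Printing Implicit Defensive.

Lemma card_set_sum (T : finType) (P : pred T) : #|[set x | P x]| = \sum_x (P x : nat).
Proof. rewrite -sum1_card big_mkcond /=; apply: eq_bigr => x _; rewrite inE; by case: (P x). Qed.

Lemma sum_half N a c : \sum_(j < N) ((a < j) && (j < c) : nat) = minn c N - minn a.+1 N.
Proof.
elim: N => [|N IH]; first by rewrite big_ord0; lia.
rewrite big_ord_recr /= IH; case: (ltnP a N); case: (ltnP N c) => /=; lia.
Qed.

Lemma sum_eq1 n (i : 'I_n) : \sum_(j < n) ((j : nat) == i : nat) = 1.
Proof.
rewrite (bigD1 i) //= eqxx big1 // => j.
by rewrite -val_eqE => /negbTE ->.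
Qed.

Lemma inv_ss n (s : 'S_n) : involution s -> forall i, s (s i) = i.
Proof. move=> /eqP h i; have := permK s i; by rewrite h. Qed.

Lemma porbit_inv n (s : 'S_n) x y : (forall i, s (s i) = i) -> y \in porbit s x -> y = x \/ y = s x.
Proof.
move=> ss /porbitP [k ->]; elim: k => [|k IH]; first by left; rewrite expg0 perm1.
rewrite expgSr permM; case: IH => ->; [right|left] => //.
Qed.

Lemma cyc_inv n (s : 'S_n) : (forall i, s (s i) = i) -> cyc s = #|[set i | s i <= i]|.
Proof.
move=> ss; rewrite /cyc /porbits.
have -> : porbit s @: 'I_n = porbit s @: [set i | s i <= i].
  apply/setP => X; apply/imsetP/imsetP => -[x _ ->]; last by exists x.
  case: (leqP (s x) x) => h; first by exists x; rewrite ?inE.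
  exists (s x); first by rewrite inE ss ltnW.
  apply/eqP; rewrite eq_porbit_mem porbit_sym; have := mem_porbit s 1 x; by rewrite expg1.
rewrite card_in_imset // => i j /=; rewrite !inE => hi hj e.
have : j \in porbit s i by rewrite e porbit_id.
case/(porbit_inv ss) => ji; first by rewrite ji.
apply: val_inj; move: hi hj; rewrite ji ss /=; lia.
Qed.

Lemma T_inv n (s : 'S_n) : (forall i, s (s i) = i) -> transp_dist s = \sum_(i < n) ((i < s i) : nat).
Proof.
move=> ss; rewrite /transp_dist cyc_inv // card_set_sum.
have : \sum_(i < n) (((s i <= i) : nat) + (i < s i)) = n.
  rewrite (eq_bigr (fun _ => 1)) ?sum_nat_const ?card_ord ?muln1 // => i _; lia.
rewrite big_split /= => h; rewrite -{1}h; exact: addKn.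
Qed.

Definition phB (a a' b b' : nat) : nat := ((a < b) && (b <= a')) + ((a' < b) && (b <= a)).
Definition phG (a a' b b' : nat) : nat := (a < b) && (b' < a').
Definition phC (a a' b b' : nat) : nat := [&& a < b, b < a' & a' < b'].
Definition phR a a' b b' := phG a a' b b' + 2 * phC a a' b b'.
Definition phE (a a' b b' : nat) : nat := 2 * (a != a') * ((b == a) + (b == a')).
Definition sym8 (f : nat -> nat -> nat -> nat -> nat) a a' b b' :=
  f a a' b b' + f a' a b b' + f a a' b' b + f a' a b' b +
  f b b' a a' + f b' b a a' + f b b' a' a + f b' b a' a.

Lemma key a a' b b' : (a == b) = (a' == b') -> (a == b') = (a' == b) ->
  sym8 phB a a' b b' = sym8 phR a a' b b' + phE a a' b b'.
Proof.
rewrite /sym8 /phR /phB /phG /phC /phE.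
case: (ltngtP a b); case: (ltngtP a a'); case: (ltngtP a b'); case: (ltngtP a' b); case: (ltngtP a' b'); case: (ltngtP b b') => //= *; lia.
Qed.

Section S.
Variables (n : nat) (s : 'S_n).
Hypothesis ss : forall i, s (s i) = i.

Definition SS (g : nat -> nat -> nat -> nat -> nat) := \sum_(i < n) \sum_(j < n) g i (s i) j (s j).

Lemma SSadd g h : SS (fun a a' b b' => g a a' b b' + h a a' b b') = SS g + SS h.
Proof. rewrite /SS -big_split /=; apply: eq_bigr => i _; by rewrite big_split. Qed.

Lemma SSr1 g : SS (fun a a' b b' => g a' a b b') = SS g.
Proof.
rewrite /SS [RHS](reindex_inj (@perm_inj _ s)) /=; apply: eq_bigr => i _.
by apply: eq_bigr => j _; rewrite ss.
Qed.

Lemma SSr2 g : SS (fun a a' b b' => g a a' b' b) = SS g.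
Proof.
rewrite /SS; apply: eq_bigr => i _.
rewrite [RHS](reindex_inj (@perm_inj _ s)) /=; apply: eq_bigr => j _; by rewrite ss.
Qed.

Lemma SSr3 g : SS (fun a a' b b' => g b b' a a') = SS g.
Proof. by rewrite /SS exchange_big. Qed.

Lemma sum8 f : SS (sym8 f) = 8 * SS f.
Proof.
rewrite /sym8 !SSadd.
have h1 : SS (fun a a' b b' => f a' a b b') = SS f by apply: SSr1.
have h2 : SS (fun a a' b b' => f a a' b' b) = SS f by apply: SSr2.
have h3 : SS (fun a a' b b' => f a' a b' b) = SS f.
  by rewrite (SSr1 (fun a a' b b' => f a a' b' b)) h2.
have h4 : SS (fun a a' b b' => f b b' a a') = SS f by apply: SSr3.
have h5 : SS (fun a a' b b' => f b' b a a') = SS f.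
  by rewrite (SSr3 (fun a a' b b' => f a' a b b')) h1.
have h6 : SS (fun a a' b b' => f b b' a' a) = SS f.
  by rewrite (SSr3 (fun a a' b b' => f a a' b' b)) h2.
have h7 : SS (fun a a' b b' => f b' b a' a) = SS f.
  by rewrite (SSr3 (fun a a' b b' => f a' a b' b)) h3.
rewrite h1 h2 h3 h4 h5 h6 h7; lia.
Qed.

Lemma SS_E : SS phE = 8 * \sum_(i < n) ((i < s i) : nat).
Proof.
rewrite /SS /phE.
have -> : \sum_(i < n) \sum_(j < n) 2 * ((i : nat) != s i) * (((j : nat) == i) + ((j : nat) == s i))
   = \sum_(i < n) 4 * (((i : nat) < s i) + (s i < i)).
  apply: eq_bigr => i _; rewrite -big_distrr /= big_split /= !sum_eq1; lia.
rewrite -big_distrr /= big_split /=.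
have -> : \sum_(i < n) ((s i < i) : nat) = \sum_(i < n) ((i < s i) : nat).
  rewrite (reindex_inj (@perm_inj _ s)) /=; apply: eq_bigr => i _; by rewrite ss.
have E : forall x y : nat, x = y -> 4 * (x + y) = 8 * y by lia. exact: E.
Qed.

Lemma D_eq : total_disp s = SS phB.
Proof.
rewrite /total_disp /SS; apply: eq_bigr => i _; rewrite /phB big_split /=.
have e : forall a b : nat, b < n -> \sum_(j < n) ((a < j) && (j <= b) : nat) = b - a.
  move=> a b bn; rewrite (eq_bigr (fun j : 'I_n => ((a < j) && (j < b.+1) : nat))) ?sum_half.
    lia.
  by move=> j _; rewrite ltnS.
rewrite !e //; case: (leqP i (s i)) => h; [rewrite distnEl // | rewrite distnEr 1?ltnW //].
  by move: h; rewrite -subn_eq0 => /eqP ->; rewrite addn0.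
by move/ltnW: h; rewrite -subn_eq0 => /eqP ->; rewrite add0n.
Qed.

Lemma I_eq : inv_count s = SS phG.
Proof.
rewrite /inv_count card_set_sum /SS pair_bigA /=; by apply: eq_bigr.
Qed.

Lemma shallow_iff : shallow s = (SS phC == 0).
Proof.
have h : 8 * SS phB = 8 * SS phR + 8 * \sum_(i < n) ((i < s i) : nat).
  by rewrite -(sum8 phB) -(sum8 phR) -SS_E -SSadd /SS; apply: eq_bigr => i _; apply: eq_bigr => j _;
     rewrite key // ?val_eqE -1?(inj_eq (@perm_inj _ s)) ?ss // (inj_eq (@perm_inj _ s)).
have hR : SS phR = SS phG + 2 * SS phC.
  rewrite /phR SSadd; congr (_ + _); rewrite /SS big_distrr; apply: eq_bigr => i _; by rewrite big_distrr.
rewrite /shallow I_eq D_eq T_inv //; apply/eqP/eqP; lia.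
Qed.

End S.

Definition gnat n x y k :=
  if (x < y) && (y < n - x) then
    (if (k < x) || (n - x <= k) then n - 1 - k
     else if k < y then x + y - 1 - k else y + n - x - 1 - k)
  else n - 1 - k.

Lemma gnat_lt n x y k : k < n -> gnat n x y k < n.
Proof. rewrite /gnat; do ! case: ifP => ?; lia. Qed.

Lemma gnat_inv n x y k : k < n -> gnat n x y (gnat n x y k) = k.
Proof.
move=> kn; set v := gnat n x y k; have : v = gnat n x y k by [].
clearbody v; rewrite /gnat; do ! case: ifP => ?; lia.
Qed.

Lemma gnat_nc n x y i j : i < n -> j < n ->
  ~~ [&& i < j, j < gnat n x y i & gnat n x y i < gnat n x y j].
Proof. rewrite /gnat; do ! case: ifP => ?; lia. Qed.

Lemma gnat_av n x y i j k : i < n -> j < n -> k < n ->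
  ~~ [&& i < j, j < k, gnat n x y i < gnat n x y j & gnat n x y j < gnat n x y k].
Proof. rewrite /gnat; do ! case: ifP => ?; lia. Qed.

Lemma gnat_at_x n x y : x < y < n - x -> gnat n x y x = y - 1.
Proof. move=> h; rewrite /gnat h /=; do ! case: ifP => ?; lia. Qed.

Lemma gnat_lt_x n x y k : k < x -> gnat n x y k = n - 1 - k.
Proof. move=> h; rewrite /gnat; do ! case: ifP => ?; lia. Qed.

Lemma gnat_invalid n x y k : ~~ (x < y < n - x) -> gnat n x y k = n - 1 - k.
Proof. by move=> /negbTE h; rewrite /gnat h. Qed.

Lemma gnat_inj n x y x' y' :
  (x < y < n - x) || ((x == 0) && (y == 0)) ->
  (x' < y' < n - x') || ((x' == 0) && (y' == 0)) ->
  (forall k, k < n -> gnat n x y k = gnat n x' y' k) -> x = x' /\ y = y'.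
Proof.
move=> h h' e.
case: (boolP (x < y < n - x)) => v; case: (boolP (x' < y' < n - x')) => v'.
- case: (ltngtP x x') => c.
  + have := e x ltac:(lia); rewrite gnat_at_x // gnat_lt_x //; lia.
  + have := e x' ltac:(lia); rewrite gnat_at_x // gnat_lt_x //; lia.
  + have := e x ltac:(lia); rewrite gnat_at_x // c gnat_at_x //; lia.
- have := e x ltac:(lia); rewrite gnat_at_x // gnat_invalid //; lia.
- have := e x' ltac:(lia); rewrite [RHS]gnat_at_x // gnat_invalid //; lia.
- lia.
Qed.

Lemma peel (f : nat -> nat) p q :
  (forall k, p <= k <= q -> p <= f k <= q) ->
  (forall k, p <= k <= q -> f (f k) = k) ->
  (forall i j, p <= i -> i < j -> j <= q -> f j < f i) ->
  forall k, p <= k <= q -> f k = p + q - k.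
Proof.
have : q - p <= q - p by [].
move: {2}(q - p) => d.
elim: d p q => [|d IH] p q hd inv inv2 dec k hk.
  have := inv k hk; lia.
case: (leqP q p) => pq.
  have := inv k hk; lia.
have hq := inv q ltac:(lia).
have fq : f q = p.
  have e := inv2 q ltac:(lia).
  case: (ltnP p (f q)) => h; last lia.
  have := dec p (f q) (leqnn p) h ltac:(lia); have := inv p ltac:(lia); lia.
have fp : f p = q by rewrite -fq inv2 //; lia.
case: (ltnP p k) => hpk; last by (have -> : k = p by lia); rewrite fp addKn.
case: (ltnP k q) => hkq; last by (have -> : k = q by lia); rewrite fq addnK.
suff: f k = p.+1 + q.-1 - k by lia.
apply: (IH p.+1 q.-1 ltac:(lia)); last lia.
- move=> k' hk'; have := inv k' ltac:(lia); have := inv2 k' ltac:(lia).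
  case: (eqVneq (f k') p) => [->|]; first lia.
  case: (eqVneq (f k') q) => [->|]; lia.
- move=> k' hk'; apply: inv2; lia.
- move=> i j hi hij hj; apply: dec; lia.
Qed.

Lemma structure n (f : nat -> nat) :
  (forall k, k < n -> f k < n) -> (forall k, k < n -> f (f k) = k) ->
  (forall i j, i < n -> j < n -> ~~ [&& i < j, j < f i & f i < f j]) ->
  (forall i j k, i < n -> j < n -> k < n -> ~~ [&& i < j, j < k, f i < f j & f j < f k]) ->
  exists x y, ((x < y < n - x) || ((x == 0) && (y == 0))) /\ forall k, k < n -> f k = gnat n x y k.
Proof.
move=> fl ff nc av.
case: (boolP [exists k : 'I_n, f k != n - 1 - k]) => [/existsP [k0 hk0]|hall]; last first.
  exists 0, 0; split => // k kn; rewrite gnat_invalid //.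
  move/existsPn: hall => /(_ (Ordinal kn)) /=; by rewrite negbK => /eqP.
have exP : exists k, (k < n) && (f k != n - 1 - k) by exists k0; rewrite ltn_ord.
case: (ex_minnP exP) => x /andP [xn fx] xmin.
have low : forall k, k < x -> f k = n - 1 - k.
  move=> k kx; apply/eqP; move: (kx); apply: contraLR => h; rewrite -leqNgt; apply: xmin.
  by rewrite h andbT; lia.
have A1 : x <= f x.
  case: (leqP x (f x)) => // h.
  have e1 := low _ h; have e2 := ff x xn; lia.
have A2 : f x < n - 1 - x.
  case: (ltngtP (f x) (n - 1 - x)) => // h; last by rewrite h eqxx in fx.
  have fxn := fl x xn.
  have e1 : f (n - 1 - f x) = f x by rewrite low; lia.
  have e2 := ff (n - 1 - f x) ltac:(lia).
  rewrite e1 in e2.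
  have e3 := ff x xn. lia.
have B : forall k, x <= k <= n - 1 - x -> x <= f k <= n - 1 - x.
  move=> k hk; have fkn := fl k ltac:(lia); have e := ff k ltac:(lia).
  case: (ltnP (f k) x) => h1.
    have := low _ h1; lia.
  case: (leqP (f k) (n - 1 - x)) => h2; first lia.
  have e1 : f (n - 1 - f k) = f k by rewrite low; lia.
  have e2 := ff (n - 1 - f k) ltac:(lia).
  rewrite e1 in e2. lia.
have C : forall k, x <= k <= f x -> x <= f k <= f x.
  move=> k hk; have := B k ltac:(lia).
  case: (leqP (f k) (f x)) => h; first lia.
  have hne : k != x by apply/eqP => e; rewrite e in h; lia.
  have hne2 : k != f x by apply/eqP => e; rewrite e (ff x xn) in h; lia.
  have := nc x k xn ltac:(lia); lia.
have D : forall k, f x < k <= n - 1 - x -> f x < f k <= n - 1 - x.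
  move=> k hk; have := B k ltac:(lia).
  case: (leqP (f k) (f x)) => h; last lia.
  move=> h2; have := C (f k) ltac:(lia); rewrite ff; lia.
have E : forall i j, x <= i -> i < j -> j <= f x -> f j < f i.
  move=> i j hi hij hj.
  case: (ltngtP (f i) (f j)) => h //.
    have := D (n - 1 - x) ltac:(lia); have := C j ltac:(lia).
    have := av i j (n - 1 - x) ltac:(lia) ltac:(lia) ltac:(lia); lia.
  have := ff i ltac:(lia); have := ff j ltac:(lia); rewrite h; lia.
have F : forall i j, (f x).+1 <= i -> i < j -> j <= n - 1 - x -> f j < f i.
  move=> i j hi hij hj.
  case: (ltngtP (f i) (f j)) => h //.
    have := D i ltac:(lia).
    have := av x i j ltac:(lia) ltac:(lia) ltac:(lia); lia.
  have := ff i ltac:(lia); have := ff j ltac:(lia); rewrite h; lia.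
have P1 := peel (p := x) (q := f x) C (fun k hk => ff k ltac:(lia)) E.
have P2 := peel (p := (f x).+1) (q := n - 1 - x) D (fun k hk => ff k ltac:(lia)) F.
exists x, (f x).+1; split; first lia.
move=> k kn; rewrite /gnat ifT; last lia.
case: ifP => h1.
  case: (ltnP k x) => h2; first by rewrite low.
  have e1 : f (n - 1 - k) = k by rewrite low; lia.
  have e2 := ff (n - 1 - k) ltac:(lia).
  rewrite e1 in e2; lia.
case: ifP => h2.
  rewrite P1; lia.
rewrite P2; lia.
Qed.

Lemma quarter N : \sum_(x < N) (N - x - x.+1) = N ^ 2 %/ 4.
Proof.
suff : \sum_(x < N) (N - x - x.+1) = N ^ 2 %/ 4 /\ \sum_(x < N.+1) (N.+1 - x - x.+1) = N.+1 ^ 2 %/ 4 by case.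
elim: N => [|N [IH1 IH2]]; first by rewrite big_ord0 big_ord1.
split => //.
rewrite big_ord_recl /=.
have -> : \sum_(i < N.+1) (N.+2 - bump 0 i - (bump 0 i).+1) = \sum_(i < N.+1) (N - i - i.+1).
  apply: eq_bigr => i _; rewrite /bump /=; lia.
rewrite big_ord_recr /= IH1.
have -> : N.+2 ^ 2 = N.+1 * 4 + N ^ 2 by rewrite !expnS expn0; nia.
rewrite divnMDl //; lia.
Qed.

Lemma sum_nc (n : nat) (F : 'I_n -> 'I_n -> nat) :
  (\sum_i \sum_j F i j == 0) = [forall i, forall j, F i j == 0].
Proof.
rewrite sum_nat_eq0; apply: eq_forallb => i; by rewrite sum_nat_eq0.
Qed.

Section Main.
Variable m : nat.
Local Notation N := m.+1.

Definition gfun x y (i : 'I_N) : 'I_N := inord (gnat N x y i).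

Lemma gfunK x y : involutive (gfun x y).
Proof.
move=> i; apply: val_inj; rewrite /gfun /=.
have h := gnat_lt x y (ltn_ord i).
by rewrite (inordK h) gnat_inv ?inordK.
Qed.

Definition gperm x y : 'S_N := perm (can_inj (gfunK x y)).

Lemma gpermE x y (i : 'I_N) : (gperm x y i : nat) = gnat N x y i.
Proof. by rewrite permE /gfun inordK //; apply: gnat_lt. Qed.

Lemma gperm_ss x y i : gperm x y (gperm x y i) = i.
Proof. by rewrite !permE gfunK. Qed.

Lemma gperm_good x y : [&& shallow (gperm x y), avoids123 (gperm x y) & involution (gperm x y)].
Proof.
apply/and3P; split.
- rewrite (shallow_iff (@gperm_ss x y)) /SS sum_nc.
  apply/forallP => i; apply/forallP => j; rewrite /phC !gpermE.
  by have := gnat_nc x y (ltn_ord i) (ltn_ord j); case: [&& _, _ & _].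
- apply/forallP => i; apply/forallP => j; apply/forallP => k; rewrite !gpermE.
  exact: gnat_av.
- apply/eqP/permP => i; by rewrite -{1}(gperm_ss x y i) permK.
Qed.

Definition sf (s : 'S_N) k := (s (inord k) : nat).

Lemma good_struct (s : 'S_N) : [&& shallow s, avoids123 s & involution s] ->
  exists x y, ((x < y < N - x) || ((x == 0) && (y == 0))) /\ s = gperm x y.
Proof.
case/and3P => sh av inv.
have ss := inv_ss inv.
have fl : forall k, k < N -> sf s k < N by move=> k _; exact: ltn_ord.
have ff : forall k, k < N -> sf s (sf s k) = k.
  by move=> k kn; rewrite /sf inord_val ss inordK.
have nc : forall i j, i < N -> j < N -> ~~ [&& i < j, j < sf s i & sf s i < sf s j].
  move=> i j iN jN; move: sh; rewrite (shallow_iff ss) /SS sum_nc.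
  move=> /forallP /(_ (inord i)) /forallP /(_ (inord j)).
  by rewrite /phC !inordK //; case: [&& _, _ & _].
have av' : forall i j k, i < N -> j < N -> k < N -> ~~ [&& i < j, j < k, sf s i < sf s j & sf s j < sf s k].
  move=> i j k iN jN kN.
  move: av => /forallP /(_ (inord i)) /forallP /(_ (inord j)) /forallP /(_ (inord k)).
  by rewrite /sf !inordK.
have [x [y [hxy e]]] := structure fl ff nc av'.
exists x, y; split => //.
apply/permP => i; apply: val_inj => /=; rewrite gpermE -e ?ltn_ord // /sf inord_val. reflexivity.
Qed.

End Main.

Lemma sum_eq0n N : \sum_(j < N.+1) ((j : nat) == 0 : nat) = 1.
Proof. exact: (sum_eq1 (@ord0 N)). Qed.

Theorem theorem5p4 (n : nat) : 1 <= n ->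
  #|[set s : 'S_n | [&& shallow s, avoids123 s & involution s]]| = (n ^ 2) %/ 4 + 1.
Proof.
case: n => [//|m] _.
set Pp := [set p : 'I_m.+1 * 'I_m.+1 |
  (p.1 < p.2 < m.+1 - p.1) || (((p.1 : nat) == 0) && ((p.2 : nat) == 0))].
have -> : [set s : 'S_m.+1 | [&& shallow s, avoids123 s & involution s]]
   = [set gperm m p.1 p.2 | p : 'I_m.+1 * 'I_m.+1 in Pp].
  apply/setP => s; rewrite inE; apply/idP/imsetP.
  - move/good_struct => [x [y [hxy ->]]].
    have xN : x < m.+1 by lia.
    have yN : y < m.+1 by lia.
    by exists (inord x, inord y); rewrite ?inE /= ?inordK.
  - move=> [p _ ->]; exact: gperm_good.
rewrite card_in_imset; last first.
  move=> [p1 p2] [q1 q2]; rewrite !inE /= => hp hq e.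
  have [e1 e2] := gnat_inj hp hq (fun k kN => etrans (esym (gpermE p1 p2 (Ordinal kN))) (etrans (congr1 (fun t : 'S_m.+1 => (t (Ordinal kN) : nat)) e) (gpermE q1 q2 (Ordinal kN)))).
  by congr pair; apply: val_inj.
rewrite card_set_sum.
rewrite -(pair_bigA _ (fun x y : 'I_m.+1 => ((x < y < m.+1 - x) || (((x : nat) == 0) && ((y : nat) == 0)) : nat))) /=.
have -> : \sum_(x < m.+1) \sum_(y < m.+1) ((x < y < m.+1 - x) || (((x : nat) == 0) && ((y : nat) == 0)) : nat)
  = \sum_(x < m.+1) (m.+1 - x - x.+1) + \sum_(x < m.+1) ((x : nat) == 0 : nat).
  rewrite -big_split; apply: eq_bigr => x _ /=.
  have -> : \sum_(y < m.+1) ((x < y < m.+1 - x) || (((x : nat) == 0) && ((y : nat) == 0)) : nat)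
     = \sum_(y < m.+1) ((x < y < m.+1 - x) : nat) + ((x : nat) == 0) * \sum_(y < m.+1) ((y : nat) == 0 : nat).
    rewrite big_distrr -big_split; apply: eq_bigr => y _ /=; lia.
  rewrite sum_half sum_eq0n; have := ltn_ord x; lia.
by rewrite quarter sum_eq0n.
Qed.
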